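(* In a PL+C model, suppose $\sum_{i\in\mathcal U}p_i\ge\alpha k$ for some $\alpha>1$. Then for every $i\in\mathcal U$, $$p_i\ge \Pr_{PLC}(\mathcal R_{i\le k})\cdot\left[1-\left(\alpha e^{1-\alpha}\right)^k\right].$$
   Context: PL+C model: universe $\mathcal U=\{1,\dots,n\}$, fixed ranking length $k\le n$. Each item $i$ has a utility $u_i\in\mathbb R$ and a consideration probability $p_i\in(0,1]$. A consideration set $C$ is drawn by including each item independently with probability $p_i$, conditioned on $|C|\ge k$: $\Pr_C(C)=\frac{1}{z_{k,p}}\prod_{h\in C}p_h\prod_{h\notin C}(1-p_h)$ for $|C|\ge k$ (with $z_{k,p}$ the normalizing constant), and $0$ otherwise. Given $C$, a length-$k$ ranking $r$ has probability $\Pr_{PL}(r\mid C)=\prod_{t=1}^k \frac{\exp(u_{r_t})}{\sum_{h\in C\setminus\{r_1,\dots,r_{t-1}\}}\exp(u_h)}$ if all $r_t\in C$, else $0$. $\Pr_{PLC}(r)=\sum_C\Pr_C(C)\Pr_{PL}(r\mid C)$, and for a set $R$ of rankings $\Pr_{PLC}(R)=\sum_{r\in R}\Pr_{PLC}(r)$. $\mathcal R_{i\le k}$ is the set of length-$k$ rankings containing $i$ (in any position). *)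

(* Defs.v *)
From mathcomp Require Import all_boot all_order all_algebra.
From mathcomp Require Import reals sequences.
From mathcomp.analysis Require Import exp.
Set Implicit Arguments. Unset Strict Implicit. Unset Printing Implicit Defensive.
Import Order.TTheory GRing.Theory Num.Theory.
Local Open Scope ring_scope.

(* Universe U = {1..n} is represented by 'I_n (items 0..n-1).
   u : utilities, p : consideration probabilities. *)
Section PLC.
Variables (R : realType) (n k : nat) (u p : 'I_n -> R).

Definition cweight (C : {set 'I_n}) : R :=
  (\prod_(h in C) p h) * (\prod_(h in ~: C) (1 - p h)).

Definition zkp : R := \sum_(C : {set 'I_n} | (k <= #|C|)%N) cweight C.

Definition PrC (C : {set 'I_n}) : R :=
  if (k <= #|C|)%N then cweight C / zkp else 0.

Definition is_ranking (r : k.-tuple 'I_n) : bool := uniq r.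

Definition PrPL (r : k.-tuple 'I_n) (C : {set 'I_n}) : R :=
  if all (fun x => x \in C) r then
    \prod_(t < k) (expR (u (tnth r t)) /
       \sum_(h in C | h \notin take t r) expR (u h))
  else 0.

Definition PrPLC (r : k.-tuple 'I_n) : R :=
  \sum_(C : {set 'I_n}) PrC C * PrPL r C.

Definition PrPLC_set (S : {set k.-tuple 'I_n}) : R :=
  \sum_(r in S) PrPLC r.

Definition R_le_k (i : 'I_n) : {set k.-tuple 'I_n} :=
  [set r : k.-tuple 'I_n | is_ranking r && (i \in r)].

End PLC.

(* Main.v *)
Require Import Defs.
From mathcomp Require Import all_boot all_order all_algebra.
From mathcomp Require Import reals sequences.
From mathcomp.analysis Require Import exp.
From mathcomp Require Import ring lra.
Import Order.TTheory GRing.Theory Num.Theory.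
Local Open Scope ring_scope.

Lemma set_expand (R : comNzRingType) (n : nat) (a b : 'I_n -> R) :
  \sum_(C : {set 'I_n}) (\prod_(h in C) a h * \prod_(h in ~: C) b h)
  = \prod_(h < n) (a h + b h).
Proof.
transitivity (\prod_(h < n) \sum_(j : bool) (if j then a h else b h)); last first.
  by apply: eq_bigr => h _; rewrite big_bool.
rewrite bigA_distr_bigA.
rewrite (reindex (fun f : {ffun 'I_n -> bool} => [set x | f x])) /=; last first.
  exists (fun C : {set 'I_n} => [ffun x => x \in C]) => [f _|C _].
    by apply/ffunP => x; rewrite ffunE inE.
  by apply/setP => x; rewrite inE ffunE.
apply: eq_bigr => f _.
rewrite [RHS](bigID (fun h => f h)) /=; congr (_ * _).
  by apply: eq_big => h; rewrite ?inE // => ->.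
by apply: eq_big => h; rewrite ?inE // => /negbTE ->.
Qed.

Lemma sum_le_sub (R : numDomainType) (I : finType) (P Q : pred I) (F : I -> R) :
  (forall i, P i -> Q i) -> (forall i, Q i -> 0 <= F i) ->
  \sum_(i | P i) F i <= \sum_(i | Q i) F i.
Proof.
move=> PQ F0; rewrite [X in X <= _]big_mkcond [X in _ <= X]big_mkcond.
apply: ler_sum => i _; case: (boolP (P i)) => Pi; first by rewrite (PQ _ Pi).
by case: ifP => // /F0.
Qed.

Lemma PrPL_ge0 (R : realType) n m (u : 'I_n -> R) (r : m.-tuple 'I_n) C :
  0 <= PrPL u r C.
Proof.
rewrite /PrPL; case: ifP => _ //; apply: prodr_ge0 => t _.
apply: divr_ge0; first exact: expR_ge0.
by apply: sumr_ge0 => h _; exact: expR_ge0.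
Qed.

Lemma PL_cons (R : realType) n m (u : 'I_n -> R) (x : 'I_n) (r : m.-tuple 'I_n) C :
  x \notin r ->
  PrPL u [tuple of x :: r] C =
  (if x \in C then expR (u x) / \sum_(h in C) expR (u h) else 0) * PrPL u r (C :\ x).
Proof.
move=> xr; rewrite /PrPL /=.
case: (boolP (x \in C)) => xC /=; last by rewrite mul0r.
have -> : all (fun y => y \in C) r = all (fun y => y \in C :\ x) r.
  apply: eq_in_all => y yr; rewrite !inE.
  by case: eqP => [yx|//]; move: xr; rewrite -yx yr.
case: ifP => _; last by rewrite mulr0.
rewrite big_ord_recl; congr (_ * _).
  have -> : take ord0 (x :: r) = [::] by [].
  congr (_ / _); apply: eq_bigl => h; by rewrite in_nil andbT.
apply: eq_bigr => j _; rewrite tnthS; congr (_ / _).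
have -> : take (lift ord0 j) (x :: r) = x :: take j r by [].
apply: eq_bigl => h /=.
rewrite !inE negb_or.
by case: (h == x); case: (h \in C).
Qed.

Lemma PL_le1 (R : realType) n (u : 'I_n -> R) m (C : {set 'I_n}) :
  \sum_(r : m.-tuple 'I_n | uniq r) PrPL u r C <= 1.
Proof.
elim: m C => [|m IH] C.
  rewrite (big_pred1 [tuple]); last by move=> r; rewrite tuple0 /= eqxx.
  by rewrite /PrPL /= big_ord0.
have -> : \sum_(r : m.+1.-tuple 'I_n | uniq r) PrPL u r C =
   \sum_(x : 'I_n) \sum_(r : m.-tuple 'I_n | uniq (x :: r)) PrPL u [tuple of x :: r] C.
  rewrite pair_big_dep /=.
  rewrite (reindex (fun p : 'I_n * m.-tuple 'I_n => [tuple of p.1 :: p.2])) /=; last first.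
    exists (fun t : m.+1.-tuple 'I_n => (thead t, [tuple of behead t])).
      by move=> [x r] _ /=; congr (_, _); try apply: val_inj.
    by move=> t _; case/tupleP: t => x r; apply: val_inj.
  done.
set W := \sum_(h in C) expR (u h).
apply: (@le_trans _ _ (\sum_(x : 'I_n) (if x \in C then expR (u x) / W else 0))).
  apply: ler_sum => x _.
  rewrite (eq_bigr (fun r => (if x \in C then expR (u x) / W else 0) * PrPL u r (C :\ x))); last first.
    by move=> r /andP[xr _]; rewrite PL_cons.
  rewrite -mulr_sumr -[X in _ <= X]mulr1; apply: ler_wpM2l.
    case: ifP => _ //; apply: divr_ge0; first exact: expR_ge0.
    by apply: sumr_ge0 => h _; exact: expR_ge0.
  apply: le_trans (IH (C :\ x)).
  apply: sum_le_sub => [r /andP[]//|r _]; exact: PrPL_ge0.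
rewrite -big_mkcond /= -mulr_suml -/W.
have [->|W0] := eqVneq W 0; first by rewrite mul0r.
by rewrite mulfV.
Qed.

Theorem theorem4 (R : realType) (n k : nat) (u p : 'I_n -> R)
  (hkn : (k <= n)%N)
  (hp : forall i, 0 < p i <= 1)
  (alpha : R) (halpha : 1 < alpha)
  (hsum : alpha * k%:R <= \sum_(i < n) p i) :
  forall i : 'I_n,
    PrPLC_set u p (R_le_k k i) * (1 - (alpha * expR (1 - alpha)) ^+ k) <= p i.
Proof.
move=> i.
have p0 h : 0 <= p h by case/andP: (hp h) => /ltW.
have p1 h : 0 <= 1 - p h by case/andP: (hp h) => _; rewrite subr_ge0.
have cw0 C : 0 <= cweight p C.
  by apply: mulr_ge0; apply: prodr_ge0 => h _.
have sum_cw : \sum_(C : {set 'I_n}) cweight p C = 1.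
  rewrite /cweight set_expand; apply: big1 => h _; by rewrite addrC subrK.
set S := PrPLC_set u p (R_le_k k i).
set Z := zkp k p.
have Zpos : 0 < Z.
  rewrite /Z /zkp (bigD1 setT) /=; last by rewrite cardsT card_ord.
  have h1 : 0 < cweight p setT.
    rewrite /cweight setCT big_set0 mulr1; apply: prodr_gt0 => h _.
    by case/andP: (hp h).
  have h2 : 0 <= \sum_(C : {set 'I_n} | (k <= #|C|)%N && (C != setT)) cweight p C.
    by apply: sumr_ge0 => C _.
  lra.
have S0 : 0 <= S.
  apply: sumr_ge0 => r _; apply: sumr_ge0 => C _; apply: mulr_ge0; last exact: PrPL_ge0.
  rewrite /PrC; case: ifP => // _; apply: divr_ge0 => //; exact: ltW.
have SZ : S * Z <= p i.
  have Z0 : Z != 0 by rewrite gt_eqF.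
  rewrite /S /PrPLC_set /PrPLC exchange_big /=.
  rewrite (eq_bigr (fun C => PrC k p C * \sum_(r in R_le_k k i) PrPL u r C)); last first.
    by move=> C _; rewrite mulr_sumr.
  apply: (@le_trans _ _ (\sum_(C : {set 'I_n}) (if i \in C then cweight p C else 0))).
    rewrite mulr_suml; apply: ler_sum => C _.
    rewrite /PrC; case: ifP => hk; last by rewrite !mul0r; case: ifP.
    case: (boolP (i \in C)) => iC.
      rewrite mulrAC -/Z divfK //; apply: ler_piMr => //.
      apply: le_trans (PL_le1 _ _ u k C).
      apply: sum_le_sub => [r|r _]; last exact: PrPL_ge0.
      by rewrite inE => /andP[].
    rewrite big1 ?mulr0 ?mul0r // => r; rewrite inE => /andP[_ ir].
    rewrite /PrPL; case: allP => // H; move: (H i ir).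
    by rewrite (negbTE iC).
  pose b' := fun h : 'I_n => if h == i then 0 else 1 - p h.
  have -> : \sum_(C : {set 'I_n}) (if i \in C then cweight p C else 0) =
     \sum_(C : {set 'I_n}) (\prod_(h in C) p h * \prod_(h in ~: C) b' h).
    apply: eq_bigr => C _; rewrite /cweight.
    case: (boolP (i \in C)) => iC.
      congr (_ * _); apply: eq_bigr => h; rewrite inE /b' => hC.
      by case: eqP => // hi; move: hC; rewrite hi iC.
    rewrite [X in _ = _ * X](bigD1 i) /=; last by rewrite inE.
    by rewrite /b' eqxx mul0r mulr0.
  rewrite set_expand (bigD1 i) //= /b' eqxx addr0 big1 ?mulr1 //.
  by move=> h /negbTE ->; rewrite addrC subrK.
have ZB : 1 - (alpha * expR (1 - alpha)) ^+ k <= Z.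
  have hZ : Z = 1 - \sum_(C : {set 'I_n} | ~~ (k <= #|C|)%N) cweight p C.
    by rewrite -sum_cw (bigID (fun C : {set 'I_n} => (k <= #|C|)%N)) /= addrK.
  rewrite hZ.
  have a0 : 0 < alpha by apply: lt_trans halpha.
  set ai := alpha^-1.
  have ai0 : 0 <= ai by rewrite invr_ge0 ltW.
  have ai1 : ai <= 1 by rewrite invf_le1 // ltW.
  have ak0 : 0 <= alpha ^+ k by rewrite exprn_ge0 // ltW.
  suff : \sum_(C : {set 'I_n} | ~~ (k <= #|C|)%N) cweight p C <= (alpha * expR (1 - alpha)) ^+ k.
    by move=> H; lra.
  apply: (@le_trans _ _ (\sum_(C : {set 'I_n}) alpha ^+ k *
        (\prod_(h in C) (ai * p h) * \prod_(h in ~: C) (1 - p h)))).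
    apply: (@le_trans _ _ (\sum_(C : {set 'I_n} | ~~ (k <= #|C|)%N) alpha ^+ k *
        (\prod_(h in C) (ai * p h) * \prod_(h in ~: C) (1 - p h)))).
      apply: ler_sum => C hC; rewrite prodrMl.
      rewrite [X in _ <= X](_ : _ = (alpha ^+ k * ai ^+ #|C|) * cweight p C); last first.
        by rewrite /cweight; ring.
      apply: ler_peMl => //.
      have hC' : (#|C| <= k)%N by rewrite -ltnNge in hC; exact: ltnW.
      have e : alpha ^+ k * ai ^+ k = 1 by rewrite -exprMn mulfV ?expr1n // gt_eqF.
      rewrite -e; apply: ler_wpM2l => //; exact: ler_wiXn2l.
    apply: sum_le_sub => // C _; apply: mulr_ge0 => //; apply: mulr_ge0;
      apply: prodr_ge0 => h _ //; exact: mulr_ge0.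
  rewrite -mulr_sumr set_expand.
  have step2 : \prod_(h < n) (ai * p h + (1 - p h)) <= \prod_(h < n) expR (- (1 - ai) * p h).
    apply: ler_prod => h _; apply/andP; split; first by apply: addr_ge0 => //; exact: mulr_ge0.
    have -> : ai * p h + (1 - p h) = 1 + - (1 - ai) * p h by ring.
    exact: expR_ge1Dx.
  apply: le_trans (ler_wpM2l ak0 step2) _.
  rewrite -expR_sum -mulr_sumr.
  have e2 : (1 - ai) * (alpha * k%:R) = (alpha - 1) * k%:R.
    by rewrite /ai; field; rewrite gt_eqF.
  have h3 : (1 - ai) * (alpha * k%:R) <= (1 - ai) * \sum_(i < n) p i.
    by apply: ler_wpM2l => //; lra.
  apply: (@le_trans _ _ (alpha ^+ k * expR ((1 - alpha) * k%:R))).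
    apply: ler_wpM2l => //; rewrite ler_expR; nra.
  by rewrite expRM_natr exprMn.
apply: le_trans SZ; exact: ler_wpM2l.
Qed.
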